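(* Let $A=(a_{ij})$ be a real $n\times n$ matrix with nonnegative entries, $\mathbf 1=(1,\ldots,1)^{\mathrm T}$, $L=\operatorname{diag}(A\mathbf 1)-A$, and let $P=I-\tau L$ with $0<\tau\le\bigl(\max_i\sum_{j\neq i}a_{ij}\bigr)^{-1}$ (so that $P$ is row stochastic). Let $S$ be the orthogonal projection of $\mathbb R^n$ onto $\mathcal R(L)\oplus\operatorname{span}(\mathbf 1)$, and let $\widetilde P=PS$. Then for every initial vector $x(0)\in\mathbb R^n$, the process $x(k)=\widetilde P^{\,k}x(0)$ coincides with the process $x(k)=P^kSx(0)$, i.e., $\widetilde P^{\,k}x(0)=P^kSx(0)$ for all $k=1,2,\ldots$.
   Context: $\mathcal R(L)$ denotes the range of $L$; $I$ is the $n\times n$ identity matrix. The process $x(k)=P^kSx(0)$ is the orthogonal projection method applied to DeGroot's iterative pooling process $y(k)=P^ky(0)$. *)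

(* Defs.v *)
From HB Require Import structures.
From mathcomp Require Import all_boot all_order all_algebra.
From mathcomp Require Import reals.
Set Implicit Arguments. Unset Strict Implicit. Unset Printing Implicit Defensive.
Import Order.TTheory GRing.Theory Num.Theory.
Local Open Scope ring_scope.

Definition ones (R : realType) (n : nat) : 'cV[R]_n := const_mx 1.

Definition laplacian (R : realType) (n : nat) (A : 'M[R]_n) : 'M[R]_n :=
  diag_mx (A *m ones R n)^T - A.

Definition max_offdiag_rowsum (R : realType) (n : nat) (A : 'M[R]_n) : R :=
  \big[Num.max/0]_(i < n) \sum_(j < n | j != i) A i j.

(* The subspace R(L) (+) span(1), encoded (mxalgebra convention) as a row
   space: the rows of L^T span the column space of L, and (ones)^T spans
   span(1). *)
Definition range_plus_ones (R : realType) (n : nat) (L : 'M[R]_n) : 'M[R]_n :=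
  (L^T + (ones R n)^T)%MS.

Definition is_orth_proj (R : realType) (n : nat) (W S : 'M[R]_n) : Prop :=
  forall x : 'cV[R]_n,
    ((S *m x)^T <= W)%MS /\
    (forall w : 'rV[R]_n, (w <= W)%MS -> w *m (x - S *m x) = 0).

(* Main.v *)
Require Import Defs.
From HB Require Import structures.
From mathcomp Require Import all_boot all_order all_algebra.
From mathcomp Require Import reals.
Import Order.TTheory GRing.Theory Num.Theory.
Local Open Scope ring_scope.

Lemma subB_ms (R : realType) m n (a b : 'rV[R]_n) (W : 'M[R]_(m, n)) :
  (a <= W)%MS -> (b <= W)%MS -> ((a - b)%R <= W)%MS.
Proof. by move=> ha hb; apply: addmx_sub => //; rewrite -scaleN1r scalemx_sub. Qed.

Lemma orth_fix (R : realType) (n : nat) (W S : 'M[R]_n) :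
  is_orth_proj W S -> forall v : 'cV[R]_n, (v^T <= W)%MS -> S *m v = v.
Proof.
move=> hS v hv.
have [hSv ho] := hS v.
set d := v - S *m v.
have hd : (d^T <= W)%MS by rewrite /d linearB /= subB_ms.
have h0 := ho _ hd.
have e : forall i, d i 0 = 0.
  have := congr1 (fun M : 'M_1 => M 0 0) h0.
  rewrite !mxE /= => /eqP; rewrite psumr_eq0; last by move=> i _; rewrite mxE -expr2 sqr_ge0.
  move=> /allP H i; have := H i (mem_index_enum i).
  by rewrite mxE -expr2 sqrf_eq0 => /eqP.
apply/eqP; rewrite eq_sym -subr_eq0; apply/eqP/matrixP => i j.
by have := e i; rewrite ord1 /d !mxE.
Qed.

Theorem theorem4 (R : realType) (n : nat) (A : 'M[R]_n) (tau : R)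
  (S : 'M[R]_n)
  (hA : forall i j, 0 <= A i j)
  (htau0 : 0 < tau)
  (htau1 : tau * max_offdiag_rowsum A <= 1)
  (hS : is_orth_proj (range_plus_ones (laplacian A)) S) :
  let P : 'M[R]_n := 1%:M - tau *: laplacian A in
  let Pt : 'M[R]_n := P *m S in
  forall (x0 : 'cV[R]_n) (k : nat), (1 <= k)%N ->
    Pt ^+ k *m x0 = P ^+ k *m (S *m x0).
Proof.
move=> P Pt.
have key : forall y : 'cV[R]_n, S *m (P *m (S *m y)) = P *m (S *m y).
  move=> y; apply: (@orth_fix _ _ _ _ hS).
  have [hSy _] := hS y.
  rewrite /P mulmxBl mul1mx -scalemxAl linearB /= subB_ms //.
  rewrite linearZ /= scalemx_sub // trmx_mul.
  apply: submx_trans (submxMl _ _) _.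
  by rewrite /range_plus_ones addsmxSl.
move=> x0 k; elim: k x0 => [//|k IH] x0 _.
case: k IH => [|k] IH; first by rewrite !expr1 mulmxA.
rewrite exprSr -mulmxE -mulmxA IH // /Pt -mulmxA key.
by rewrite [P ^+ k.+2]exprSr -mulmxE -mulmxA.
Qed.
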